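(* Let $X,Y$ be Banach spaces, let $S$ be a subset of $X$ (with the induced metric), and let $f:S\to Y$ be a coarse homeomorphism that is coarse Lipschitz; let $g:Y\to S$ be a coarsely continuous map with $\sup_{x\in S}\|g(f(x))-x\|<\infty$ and $K:=\sup_{y\in Y}\|f(g(y))-y\|<\infty$. Then for all $0<t\le1$, $$\bar{\delta}_X\left(\frac{t}{56\,{\rm Lip}_\infty(f)\,c_\infty(f)}\right)\le\bar{\rho}_Y(t),$$ where $c_\infty(f)$ is computed with respect to the constant $K$.
   Context: All Banach spaces are real and infinite-dimensional; $B_X,S_X$ are the closed unit ball and sphere; $B_Z(z,r)$ is the closed ball of radius $r$ about $z$; for $A\subseteq Y$, $A^K:=\{y:\|y-a\|\le K\text{ for some }a\in A\}$. $\bar{\rho}_Y(t):=\sup_{y\in S_Y}\inf_{\dim(Y/Z)<\infty}\sup_{z\in S_Z}\|y+tz\|-1$ and $\bar{\delta}_X(t):=\inf_{x\in S_X}\sup_{\dim(X/Z)<\infty}\inf_{z\in S_Z}\|x+tz\|-1$ (over finite-codimensional subspaces $Z$). A map $h$ between metric spaces is coarsely continuous if $\omega_h(t):=\sup\{d(h(x),h(y)): d(x,y)\le t\}<\infty$ for all $t>0$. $f:S\to Y$ is a coarse homeomorphism if it is coarsely continuous and there is a coarsely continuous $g:Y\to S$ with $\sup_x\|g(f(x))-x\|<\infty$ and $\sup_y\|f(g(y))-y\|<\infty$; it is known that then $f$ is co-coarsely continuous with constant $K=\sup_y\|f(g(y))-y\|$, i.e. for every $d>K$ there is $\delta(d)>0$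 with $f(B_S(x,\delta))^K\supseteq B_Y(f(x),d)$ for all $x\in S$. ${\rm Lip}_s(f):=\sup\{\|f(x)-f(y)\|/\|x-y\|:\|x-y\|\ge s\}$, ${\rm Lip}_\infty(f):=\inf_{s>0}{\rm Lip}_s(f)$; $f$ is coarse Lipschitz if ${\rm Lip}_s(f)<\infty$ for some $s>0$. For $d>K$, $c_d$ is the infimum of all $c>0$ with $f(B_S(x,cr))^K\supseteq B_Y(f(x),r)$ for all $x\in S$, $r\ge d$, and $c_\infty(f):=\inf_{d>K}c_d=\lim_{d\to\infty}c_d$. *)

(* Defs.v *)
From HB Require Import structures.
From mathcomp Require Import all_boot all_order all_algebra.
From mathcomp Require Import all_classical all_reals all_analysis.
Set Implicit Arguments. Unset Strict Implicit. Unset Printing Implicit Defensive.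
Import Order.TTheory GRing.Theory Num.Theory.
Import numFieldNormedType.Exports.
Local Open Scope classical_set_scope.
Local Open Scope ring_scope.

Section Defs.
Variable R : realType.

Definition infinite_dimensional (X : normedModType R) : Prop :=
  forall (n : nat) (v : 'I_n -> X),
    exists x : X, ~ (exists a : 'I_n -> R, x = \sum_(i < n) a i *: v i).

Definition is_subspace (Y : normedModType R) (Z : set Y) : Prop :=
  Z 0 /\ forall (a : R) (x y : Y), Z x -> Z y -> Z (a *: x + y).

(* Z is a finite-codimensional subspace: dim(Y/Z) < oo, i.e. Y = Z + span(v_1..v_n) *)
Definition finite_codim (Y : normedModType R) (Z : set Y) : Prop :=
  is_subspace Z /\
  exists (n : nat) (v : 'I_n -> Y), forall y : Y,
    exists (a : 'I_n -> R) (z : Y), Z z /\ y = z + \sum_(i < n) a i *: v i.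

Definition sphere_of (Y : normedModType R) (Z : set Y) : set Y :=
  [set z | Z z /\ `|z| = 1].

Definition rho_bar (Y : normedModType R) (t : R) : R :=
  sup [set inf [set sup [set `|y + t *: z| | z in sphere_of Z]
               | Z in [set Z : set Y | finite_codim Z]] - 1
      | y in sphere_of [set: Y]].

Definition delta_bar (X : normedModType R) (t : R) : R :=
  inf [set sup [set inf [set `|x + t *: z| | z in sphere_of Z]
               | Z in [set Z : set X | finite_codim Z]] - 1
      | x in sphere_of [set: X]].

Definition coarsely_continuous_on (X Y : normedModType R) (A : set X)
    (h : X -> Y) : Prop :=
  forall t : R, 0 < t -> exists M : R, forall x y : X, A x -> A y ->
    `|x - y| <= t -> `|h x - h y| <= M.

Definition Lip_s (X Y : normedModType R) (S : set X) (f : X -> Y) (s : R)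
    : \bar R :=
  ereal_sup [set ((`|f p.1 - f p.2| / `|p.1 - p.2|)%:E)
            | p in [set p : X * X | S p.1 /\ S p.2 /\ s <= `|p.1 - p.2|]].

Definition Lip_inf (X Y : normedModType R) (S : set X) (f : X -> Y) : \bar R :=
  ereal_inf [set Lip_s S f s | s in [set s : R | 0 < s]].

Definition coarse_lipschitz (X Y : normedModType R) (S : set X) (f : X -> Y)
    : Prop :=
  exists s : R, 0 < s /\ (Lip_s S f s < +oo)%E.

(* the admissible constants c for c_d: c > 0 and
   f(B_S(x, c r))^K contains B_Y(f x, r) for all x in S and r >= d *)
Definition c_admissible (X Y : normedModType R) (S : set X) (f : X -> Y)
    (K d c : R) : Prop :=
  0 < c /\
  forall (x : X) (r : R), S x -> d <= r ->
    forall y : Y, `|y - f x| <= r ->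
      exists x' : X, S x' /\ `|x' - x| <= c * r /\ `|y - f x'| <= K.

(* c_d (extended real: inf of the empty set is +oo) *)
Definition c_d (X Y : normedModType R) (S : set X) (f : X -> Y) (K d : R)
    : \bar R :=
  ereal_inf [set c%:E | c in [set c : R | c_admissible S f K d c]].

Definition c_inf (X Y : normedModType R) (S : set X) (f : X -> Y) (K : R)
    : \bar R :=
  ereal_inf [set c_d S f K d | d in [set d : R | K < d]].

End Defs.

(* Main.v *)
Require Import Defs.
From HB Require Import structures.
From mathcomp Require Import all_boot all_order all_algebra.
From mathcomp Require Import all_classical all_reals all_analysis.
Import Order.TTheory GRing.Theory Num.Theory.
Import numFieldNormedType.Exports.
Local Open Scope classical_set_scope.
Local Open Scope ring_scope.
From mathcomp Require Import ring lra.
Set Implicit Arguments. Unset Strict Implicit. Unset Printing Implicit Defensive.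

Section Lin.
Variables (R : realType) (V : normedModType R).

Definition span (m : nat) (f : nat -> V) (y : V) :=
  exists a : nat -> R, y = \sum_(i < m) a i *: f i.

Lemma sumD m (a b : nat -> R) (f : nat -> V) :
  \sum_(i < m) a i *: f i + \sum_(i < m) b i *: f i =
  \sum_(i < m) (a i + b i) *: f i.
Proof. by rewrite -big_split /=; apply: eq_bigr => i _; rewrite scalerDl. Qed.

Lemma sumB m (a b : nat -> R) (f : nat -> V) :
  \sum_(i < m) a i *: f i - \sum_(i < m) b i *: f i =
  \sum_(i < m) (a i - b i) *: f i.
Proof. by rewrite -sumrB /=; apply: eq_bigr => i _; rewrite scalerBl. Qed.

Lemma sumZ m c (a : nat -> R) (f : nat -> V) :
  c *: \sum_(i < m) a i *: f i = \sum_(i < m) (c * a i) *: f i.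
Proof. by rewrite scaler_sumr; apply: eq_bigr => i _; rewrite scalerA. Qed.

Lemma norm_le_all (y : V) : (forall e : R, 0 < e -> `|y| <= e) -> y = 0.
Proof.
move=> H; apply/normr0_eq0/eqP; rewrite eq_le normr_ge0 andbT.
by apply/ler_addgt0Pr => e e0; rewrite add0r; exact: H.
Qed.

Lemma vecD4 (u1 u2 u3 u4 : V) : (u1 + u2) - (u3 + u4) = (u1 - u3) + (u2 - u4).
Proof. by rewrite opprD addrACA. Qed.

Lemma vecB2 (y p q : V) : (y - q) - (y - p) = p - q.
Proof. by rewrite opprB addrC addrA subrK. Qed.

Lemma closed_span m (f : nat -> V) (y : V) :
  (forall e : R, 0 < e -> exists a : nat -> R, `|y - \sum_(i < m) a i *: f i| <= e) ->
  span m f y.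
Proof.
elim: m y => [|m IH] y Hy.
  exists (fun _ => 0); rewrite big_ord0; apply: norm_le_all => e e0.
  by have [a] := Hy e e0; rewrite big_ord0 subr0.
have [[d [d0 Hd]]|HA] := pselect (exists d : R, 0 < d /\
    forall a : nat -> R, d < `|f m - \sum_(i < m) a i *: f i|); last first.
  have [b Hb] : span m f (f m).
    apply: IH => e e0; apply: contrapT => Hn; apply: HA; exists e; split => // a.
    by rewrite ltNge; apply/negP => Ha; apply: Hn; exists a.
  have [c Hc] : span m f y.
    apply: IH => e e0; have [a Ha] := Hy e e0.
    exists (fun i => a i + a m * b i).
    by rewrite big_ord_recr /= Hb sumZ (sumD _ a (fun i => a m * b i)) in Ha.
  exists (fun i => if i == m then 0 else c i).
  rewrite big_ord_recr /= eqxx scale0r addr0 Hc; apply: eq_bigr => i _.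
  by rewrite (ltn_eqF (ltn_ord i)).
have LB : forall (a : nat -> R) (b : R),
    `|b| * d <= `|\sum_(i < m) a i *: f i + b *: f m|.
  move=> a b; have [->|bn0] := eqVneq b 0; first by rewrite normr0 mul0r normr_ge0.
  have -> : \sum_(i < m) a i *: f i + b *: f m =
            b *: (f m - \sum_(i < m) (- (a i / b)) *: f i).
    rewrite scalerBr (sumZ _ _ (fun i => - (a i / b))) addrC; congr (_ + _).
    rewrite -sumrN; apply: eq_bigr => i _.
    by rewrite mulrN mulrC divfK // scaleNr opprK.
  rewrite normrZ ler_wpM2l //; exact: ltW (Hd (fun i => - (a i / b))).
pose A := [set r : R | exists (b e : R) (a : nat -> R), 0 < e /\
   `|y - (\sum_(i < m) a i *: f i + b *: f m)| <= e /\ r = b - 2 * (e / d)].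
have pair : forall b e (a : nat -> R) b' e' (a' : nat -> R),
    `|y - (\sum_(i < m) a i *: f i + b *: f m)| <= e ->
    `|y - (\sum_(i < m) a' i *: f i + b' *: f m)| <= e' ->
    b - b' <= e / d + e' / d.
  move=> b e a b' e' a' H1 H2.
  have := LB (fun i => a i - a' i) (b - b').
  rewrite -(sumB _ a a') scalerBl -vecD4.
  rewrite -(vecB2 y (\sum_(i < m) a i *: f i + b *: f m)) => H3.
  have H4 : `|b - b'| * d <= e' + e.
    apply: (le_trans H3).
    have H5 := ler_normB (y - (\sum_(i < m) a' i *: f i + b' *: f m)) (y - (\sum_(i < m) a i *: f i + b *: f m)).
    have H6 := lerD H2 H1.
    exact: (le_trans H5 H6).
  rewrite [e' + e]addrC in H4.
  rewrite -mulrDl ler_pdivlMr //; apply: le_trans H4.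
  by rewrite ler_wpM2r ?(ltW d0) //; exact: ler_norm.
have [a1 Ha1] := Hy 1 ltr01.
rewrite big_ord_recr /= in Ha1.
have Ane : A !=set0 by exists (a1 m - 2 * (1 / d)), (a1 m), 1, a1.
have Aub : has_ubound A.
  exists (a1 m + 1 / d) => _ [b [e [a [e0 [He ->]]]]].
  have := pair _ _ _ _ _ _ He Ha1.
  have : 0 <= e / d by rewrite divr_ge0 // ltW.
  lra.
set al := sup A.
have Hal : forall b e (a : nat -> R), 0 < e ->
    `|y - (\sum_(i < m) a i *: f i + b *: f m)| <= e ->
    `|b - al| <= 2 * (e / d).
  move=> b e a e0 He; rewrite ler_norml; apply/andP; split.
  - have : al <= b + e / d.
      apply: ge_sup => // _ [b' [e' [a' [e0' [He' ->]]]]].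
      have := pair _ _ _ _ _ _ He' He.
      have : 0 <= e' / d by rewrite divr_ge0 // ltW.
      lra.
    have : 0 <= e / d by rewrite divr_ge0 // ltW.
    lra.
  - have : b - 2 * (e / d) <= al.
      by apply: ub_le_sup => //; exists b, e, a.
    lra.
have [c Hc] : span m f (y - al *: f m).
  apply: IH => e e0.
  pose e1 := e / (1 + 2 * (`|f m| / d)).
  have pos : 0 < 1 + 2 * (`|f m| / d).
    have : 0 <= `|f m| / d by rewrite divr_ge0 // ltW.
    lra.
  have e10 : 0 < e1 by rewrite divr_gt0.
  have [a Ha] := Hy e1 e10.
  rewrite big_ord_recr /= in Ha.
  exists a.
  have Hb := Hal _ _ _ e10 Ha.
  have -> : y - al *: f m - \sum_(i < m) a i *: f i =
            (y - (\sum_(i < m) a i *: f i + a m *: f m)) + (a m - al) *: f m.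
    by rewrite scalerBl opprD !addrA subrK addrAC.
  apply: le_trans (ler_normD _ _) _.
  rewrite normrZ.
  have -> : e = e1 + 2 * (e1 / d) * `|f m|.
    rewrite /e1; field; have h := normr_ge0 (f m).
    by rewrite gt_eqF // gt_eqF //; lra.
  apply: lerD => //; apply: ler_wpM2r => //.
exists (fun i => if i == m then al else c i).
rewrite big_ord_recr /= eqxx.
have -> : \sum_(i < m) (if (i : nat) == m then al else c i) *: f i =
          \sum_(i < m) c i *: f i.
  by apply: eq_bigr => i _; rewrite (ltn_eqF (ltn_ord i)).
by rewrite -Hc subrK.
Qed.

End Lin.

Section Sub.
Variables (R : realType) (V : normedModType R).
Implicit Types (C W Z : set V).

Lemma sub0 C : is_subspace C -> C 0.
Proof. by case. Qed.

Lemma subD C x y : is_subspace C -> C x -> C y -> C (x + y).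
Proof. by move=> [_ H] Cx Cy; have := H 1 x y Cx Cy; rewrite scale1r. Qed.

Lemma subZ C (a : R) x : is_subspace C -> C x -> C (a *: x).
Proof. by move=> [C0 H] Cx; have := H a x 0 Cx C0; rewrite addr0. Qed.

Lemma subN C x : is_subspace C -> C x -> C (- x).
Proof. by move=> hC Cx; rewrite -scaleN1r; exact: subZ. Qed.

Lemma subB C x y : is_subspace C -> C x -> C y -> C (x - y).
Proof. by move=> hC Cx Cy; apply: subD => //; exact: subN. Qed.

Lemma sub_sum C m (a : nat -> R) (f : nat -> V) : is_subspace C ->
  (forall i, (i < m)%N -> C (f i)) -> C (\sum_(i < m) a i *: f i).
Proof.
move=> hC Hf; apply: big_ind => //; first exact: sub0.
  by move=> x y; exact: subD.
by move=> i _; apply: subZ => //; exact: Hf.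
Qed.

Lemma sum_split m n (F : nat -> V) :
  \sum_(i < m + n) F i = \sum_(i < m) F i + \sum_(i < n) F (m + i)%N.
Proof.
elim: n => [|n IH]; first by rewrite addn0 big_ord0 addr0.
by rewrite addnS !big_ord_recr /= IH addrA.
Qed.

Lemma hYnat : infinite_dimensional V -> forall m (f : nat -> V),
  exists x, ~ span m f x.
Proof.
move=> hY m f; have [x Hx] := hY m (fun i : 'I_m => f i).
by exists x => -[a Ha]; apply: Hx; exists (fun i : 'I_m => a i).
Qed.

Lemma codim_nat Z : finite_codim Z -> exists n (v : nat -> V),
  forall y, exists (a : nat -> R) z, Z z /\ y = z + \sum_(i < n) a i *: v i.
Proof.
move=> [_ [n [v Hv]]].
exists n, (fun k => if @insub nat (fun k => (k < n)%N) 'I_n k is Some i then v i else 0).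
move=> y; have [a [z [Zz ->]]] := Hv y.
exists (fun k => if @insub nat (fun k => (k < n)%N) 'I_n k is Some i then a i else 0), z.
split => //; congr (_ + _); apply: eq_bigr => i _.
by rewrite valK.
Qed.

Lemma exists_out W : infinite_dimensional V -> finite_codim W ->
  forall m (f : nat -> V), exists w0, W w0 /\ ~ span m f w0.
Proof.
move=> hY hW m f; apply: contrapT => Hn.
have HW : forall w, W w -> span m f w.
  move=> w Ww; apply: contrapT => Hs; apply: Hn; by exists w.
have [n [v Hv]] := codim_nat hW.
pose h k := if (k < m)%N then f k else v (k - m)%N.
have [x Hx] := hYnat hY (m + n) h.
apply: Hx; have [b [z [Zz ->]]] := Hv x.
have [a ->] := HW z Zz.
exists (fun k => if (k < m)%N then a k else b (k - m)%N).
rewrite (sum_split m n (fun k => (if (k < m)%N then a k else b (k - m)%N) *: h k)) /=.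
congr (_ + _).
  by apply: eq_bigr => i _; rewrite /h ltn_ord.
apply: eq_bigr => i _; rewrite /h ltnNge leq_addr /=.
by rewrite addKn.
Qed.

Lemma Riesz W m (f : nat -> V) w0 : is_subspace W ->
  (forall i, (i < m)%N -> W (f i)) -> W w0 -> ~ span m f w0 ->
  exists w, W w /\ `|w| = 1 /\
    forall a : nat -> R, 1 / 2 < `|w - \sum_(i < m) a i *: f i|.
Proof.
move=> hW Hf Ww0 Hn.
have [e [e0 He]] : exists e : R, 0 < e /\
    forall a : nat -> R, e < `|w0 - \sum_(i < m) a i *: f i|.
  apply: contrapT => H; apply: Hn; apply: closed_span => e e0.
  apply: contrapT => H'; apply: H; exists e; split => // a.
  by rewrite ltNge; apply/negP => Ha; apply: H'; exists a.
pose E := [set `|w0 - \sum_(i < m) a i *: f i| | a in [set: nat -> R]].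
have En : E !=set0 by exists `|w0 - \sum_(i < m) 0 *: f i|, (fun _ => 0).
have Elb : has_lbound E by exists 0 => _ [a _ <-].
set D := inf E.
have eD : e <= D.
  by apply: lb_le_inf => // _ [a _ <-]; exact: ltW.
have D0 : 0 < D by apply: lt_le_trans eD.
have D2 : D < 2 * D by lra.
have [_ [a0 _ <-] HN] := inf_lt En D2.
set N := `|w0 - \sum_(i < m) a0 i *: f i| in HN *.
have DN : D <= N by apply: ge_inf => //; exists a0.
have N0 : 0 < N by apply: lt_le_trans DN.
exists (N^-1 *: (w0 - \sum_(i < m) a0 i *: f i)); split.
  apply: (subZ _ hW); apply: (subB hW Ww0); exact: (sub_sum _ hW Hf).
have Nn0 : N != 0 by rewrite gt_eqF.
split; first by rewrite normrZ normfV (ger0_norm (ltW N0)) mulVf.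
move=> a.
have -> : N^-1 *: (w0 - \sum_(i < m) a0 i *: f i) - \sum_(i < m) a i *: f i =
   N^-1 *: (w0 - \sum_(i < m) (a0 i + N * a i) *: f i).
  rewrite -(sumD _ a0 (fun i => N * a i)) -(sumZ _ N a) opprD addrA.
  by rewrite [RHS]scalerBr scalerA mulVf // scale1r.
rewrite normrZ normfV (ger0_norm (ltW N0)).
have HD : D <= `|w0 - \sum_(i < m) (a0 i + N * a i) *: f i|.
  by apply: ge_inf => //; exists (fun i => a0 i + N * a i).
apply: lt_le_trans (_ : D / N <= _); last first.
  by rewrite mulrC ler_wpM2l // invr_ge0 ltW.
by rewrite ltr_pdivlMr //; lra.
Qed.

End Sub.

Section Pig.
Variables (R : realType) (V : normedModType R).
Implicit Types (C W Z : set V).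

Lemma vecL2 (a b x y : V) : (a - x) - (b - y) = (a - b) - (x - y).
Proof. by rewrite !opprB addrACA [- x - b]addrC addrACA. Qed.
Lemma vecI1 (a b c d : V) : (a - b) - (c + d) = (a - c) - (b + d).
Proof. by rewrite !opprD !addrA (addrAC a (-b)). Qed.

Definition infinite (I : nat -> Prop) := forall N, exists k, (N <= k)%N /\ I k.

Lemma infinite_mono (P Q : nat -> Prop) : (forall k, P k -> Q k) ->
  infinite P -> infinite Q.
Proof. by move=> H hP N; have [k [Nk Pk]] := hP N; exists k; split => //; exact: H. Qed.

Lemma pigeon_nat N (h : nat -> nat) (I : nat -> Prop) : infinite I ->
  (forall k, I k -> (h k <= N)%N) -> exists j, infinite (fun k => I k /\ h k = j).
Proof.
elim: N I => [|N IH] I hI hb.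
  exists 0%N; apply: infinite_mono hI => k Ik; split => //.
  by apply/eqP; rewrite -leqn0; exact: hb.
have [H|H] := pselect (infinite (fun k => I k /\ h k = N.+1)); first by exists N.+1.
have [N0 HN0] : exists N0, forall k, (N0 <= k)%N -> I k -> h k <> N.+1.
  apply: contrapT => Hn; apply: H => M; apply: contrapT => HM; apply: Hn.
  exists M => k Mk Ik hk; apply: HM; exists k; split => //.
have h1 : infinite (fun k => (N0 <= k)%N /\ I k).
  move=> M; have [k [Mk Ik]] := hI (maxn M N0); exists k.
  by rewrite !geq_max in Mk; case/andP: Mk => -> ->.
have h2 : forall k, (N0 <= k)%N /\ I k -> (h k <= N)%N.
  move=> k [N0k Ik]; have := hb k Ik; rewrite leq_eqVlt => /orP[/eqP|//].
  by move/(HN0 k N0k Ik).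
have [j Hj] := IH _ h1 h2.
by exists j; apply: infinite_mono Hj => k [[_ ?] ?].
Qed.

Lemma pigeon_real (I : nat -> Prop) (be : nat -> R) (A del : R) : infinite I ->
  (forall k, I k -> `|be k| <= A) -> 0 < del ->
  exists I' : nat -> Prop, (forall k, I' k -> I k) /\ infinite I' /\
    forall k l, I' k -> I' l -> `|be k - be l| <= del.
Proof.
move=> hI hA d0.
pose x k := (be k + A) / del.
have hb : forall k, I k -> (Num.truncn (x k) <= Num.truncn ((A + A) / del))%N.
  move=> k Ik; apply: le_truncn; rewrite /x ler_wpM2r ?invr_ge0 ?(ltW d0) //.
  by have := hA k Ik; rewrite ler_norml => /andP[_ h]; lra.
have [j Hj] := @pigeon_nat (Num.truncn ((A + A) / del)) (fun k => Num.truncn (x k)) I hI hb.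
exists (fun k => I k /\ Num.truncn (x k) = j); split; first by move=> k [].
split => // k l [Ik hk] [Il hl].
have x0 : forall k, I k -> 0 <= x k.
    move=> k' Ik'; rewrite /x divr_ge0 ?(ltW d0) //.
    by have := hA k' Ik'; rewrite ler_norml => /andP[h _]; lra.
  have := truncn_itv (x0 _ Ik); have := truncn_itv (x0 _ Il).
  rewrite hk hl => /andP[h1 h2] /andP[h3 h4].
  have : `|x k - x l| <= 1.
    rewrite ler_norml; apply/andP; split.
    - have : (j.+1%:R : R) = j%:R + 1 by rewrite -addn1 natrD.
      lra.
    - have : (j.+1%:R : R) = j%:R + 1 by rewrite -addn1 natrD.
      lra.
  by rewrite /x -mulrBl [be l + A]addrC addrKA normrM normfV (gtr0_norm d0) ler_pdivrMr // mul1r.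
Qed.

End Pig.

Section Pig2.
Variables (R : realType) (V : normedModType R).
Implicit Types (C W Z : set V).

Lemma vecI2 (x c p q : V) : x - (c + q) = (x - (c + p)) + (p - q).
Proof. by rewrite !opprD !addrA addrNK. Qed.

Lemma norm_tri (x y : V) : `|y| <= `|x| + `|x - y|.
Proof. by have := ler_normB x (x - y); rewrite opprB addrC subrK. Qed.

Lemma pigeon_codim m : forall C (f : nat -> V) (u : nat -> V) (I : nat -> Prop) (B eps : R),
  is_subspace C -> infinite I -> (forall k, I k -> `|u k| <= B) ->
  (forall k, I k -> exists (c : V) (b : nat -> R), C c /\ u k = c + \sum_(i < m) b i *: f i) ->
  0 < eps ->
  exists I' : nat -> Prop, (forall k, I' k -> I k) /\ infinite I' /\
    forall k l, I' k -> I' l -> exists c, C c /\ `|u k - u l - c| <= eps.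
Proof.
elim: m => [|m IH] C f u I B eps hC hI hB hD e0.
  exists I; split => //; split => // k l Ik Il.
  have [ck [b [Ck ->]]] := hD k Ik; have [cl [b' [Cl ->]]] := hD l Il.
  exists (ck - cl); split; first exact: subB.
  by rewrite !big_ord0 !addr0 subrr normr0 ltW.
pose C' := fun x => exists c (be : R), C c /\ x = c + be *: f m.
have hC' : is_subspace C'.
  split; first by exists 0, 0; split; [exact: sub0 | rewrite scale0r addr0].
  move=> a _ _ [c [be [Cc ->]]] [c' [be' [Cc' ->]]].
  exists (a *: c + c'), (a * be + be'); split; first by apply: subD => //; exact: subZ.
  by rewrite scalerDr scalerDl scalerA addrACA.
have hD' : forall k, I k -> exists c (b : nat -> R), C' c /\ u k = c + \sum_(i < m) b i *: f i.
  move=> k Ik; have [c [b [Cc ->]]] := hD k Ik.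
  exists (c + b m *: f m), b; split; first by exists c, (b m).
  by rewrite big_ord_recr /= addrA addrAC.
have e30 : 0 < eps / 3 by rewrite divr_gt0.
have [I1 [sub1 [inf1 H1]]] := IH C' f u I B (eps / 3) hC' hI hB hD' e30.
have [[d [d0 Hd]]|HA] := pselect (exists d : R, 0 < d /\
    forall c, C c -> d < `|f m - c|); last first.
  exists I1; split => //; split => // k l Ik Il.
  have [_ [[c [be [Cc ->]]] Hc]] := H1 k l Ik Il.
  have b10 : 0 < `|be| + 1 by rewrite ltr_wpDl.
  have [c0 [Cc0 Hc0]] : exists c0, C c0 /\ `|f m - c0| <= eps / 3 / (`|be| + 1).
    apply: contrapT => Hn; apply: HA; exists (eps / 3 / (`|be| + 1)); split.
      by rewrite divr_gt0.
    move=> c' Cc'; rewrite ltNge; apply/negP => Hc'; apply: Hn; by exists c'.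
  exists (c + be *: c0); split; first by apply: subD => //; exact: subZ.
  rewrite (vecI2 _ _ (be *: f m)) -scalerBr.
  apply: le_trans (ler_normD _ _) _; rewrite normrZ.
  have : `|be| * `|f m - c0| <= eps / 3.
    apply: le_trans (_ : `|be| * (eps / 3 / (`|be| + 1)) <= _).
      by rewrite ler_wpM2l.
    move: e30; set x := eps / 3 => x0.
    rewrite mulrA ler_pdivrMr //; have := normr_ge0 be; nra.
  lra.
have LB : forall c (be : R), C c -> `|be| * d <= `|c + be *: f m|.
  move=> c be Cc; have [->|ben0] := eqVneq be 0.
    by rewrite normr0 mul0r normr_ge0.
  have -> : c + be *: f m = be *: (f m - (- be^-1) *: c).
    by rewrite scalerBr scalerA mulrN mulfV // scaleN1r opprK addrC.
  rewrite normrZ ler_wpM2l //; apply: ltW; apply: Hd; exact: subZ.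
have [k0 [_ Ik0]] := inf1 0%N.
have Hex : forall k, exists p : V * R, I1 k ->
    C p.1 /\ `|u k - u k0 - (p.1 + p.2 *: f m)| <= eps / 3.
  move=> k; have [Ik|nIk] := pselect (I1 k); last by exists (0, 0).
  have [_ [[c [be [Cc ->]]] Hc]] := H1 k k0 Ik Ik0.
  by exists (c, be).
have [pp Hpp] := choice Hex.
pose be k := (pp k).2; pose cc k := (pp k).1.
have hbe : forall k, I1 k -> `|be k| <= (B + B + eps / 3) / d.
  move=> k Ik; have [Cc Hc] := Hpp k Ik.
  rewrite ler_pdivlMr //; apply: le_trans (LB _ _ Cc) _.
  apply: le_trans (norm_tri (u k - u k0) _) _.
  apply: lerD => //; apply: le_trans (ler_normB _ _) _.
  by apply: lerD; apply: hB; apply: sub1.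
have f10 : 0 < `|f m| + 1 by rewrite ltr_wpDl.
have del0 : 0 < eps / 3 / (`|f m| + 1) by rewrite divr_gt0.
have [I2 [sub2 [inf2 H2]]] := pigeon_real inf1 hbe del0.
exists I2; split; first by move=> k /sub2 /sub1.
split => // k l Ik Il.
have [Cck Hk] := Hpp k (sub2 _ Ik); have [Ccl Hl] := Hpp l (sub2 _ Il).
exists (cc k - cc l); split; first exact: subB.
rewrite -vecL2.
rewrite vecI1 in Hk; rewrite vecI1 in Hl.
apply: le_trans (ler_distD (u k0 + be k *: f m) _ _) _.
apply: le_trans (lerD (lexx _) (ler_distD (u k0 + be l *: f m) _ _)) _.
have Emid : (u k0 + be k *: f m) - (u k0 + be l *: f m) = (be k - be l) *: f m.
  by rewrite [u k0 + be k *: f m]addrC addrKA scalerBl.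
rewrite Emid normrZ (distrC _ (u l - cc l)).
have : `|be k - be l| * `|f m| <= eps / 3.
  apply: le_trans (_ : eps / 3 / (`|f m| + 1) * `|f m| <= _).
    by rewrite ler_wpM2r // H2.
  rewrite mulrAC ler_pdivrMr // ler_wpM2l ?(ltW e30) //.
  by rewrite lerDl.
rewrite -/(be k) -/(be l) -/(cc k) -/(cc l) in Hk Hl *.
lra.
Qed.

Lemma codim_pair Z (u : nat -> V) (B eps : R) : finite_codim Z ->
  (forall k, `|u k| <= B) -> 0 < eps ->
  exists k l, k <> l /\ exists z, Z z /\ `|u k - u l - z| <= eps.
Proof.
move=> hZ hB e0; have [n [v Hv]] := codim_nat hZ.
have hI : infinite (fun _ => True) by move=> N; exists N.
have hD : forall k, True -> exists (c : V) (b : nat -> R), Z c /\ u k = c + \sum_(i < n) b i *: v i.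
  by move=> k _; have [a [z [Zz ->]]] := Hv (u k); exists z, a.
have [I' [_ [inf' H']]] := @pigeon_codim n Z v u (fun _ => True) B eps hZ.1 hI (fun k _ => hB k) hD e0.
have [k [_ Ik]] := inf' 0%N; have [l [kl Il]] := inf' k.+1.
exists k, l; split; last exact: H'.
by move=> e; rewrite e ltnn in kl.
Qed.

End Pig2.

Section Sep.
Variables (R : realType) (V : normedModType R).
Implicit Types (C W Z : set V).

Lemma sep_seq W : infinite_dimensional V -> finite_codim W ->
  exists w : nat -> V, (forall k, W (w k) /\ `|w k| = 1) /\
    forall k l, (l < k)%N -> 1 / 2 < `|w k - w l|.
Proof.
move=> hY hW; have hWs := hW.1.
have step : forall p : (nat -> V) * nat, exists w, (forall i, (i < p.2)%N -> W (p.1 i)) ->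
   W w /\ `|w| = 1 /\ forall a : nat -> R, 1 / 2 < `|w - \sum_(i < p.2) a i *: p.1 i|.
  move=> [f m] /=; have [w0 [Ww0 Hn]] := exists_out hY hW m f.
  have [Hf|Hf] := pselect (forall i, (i < m)%N -> W (f i)); last by exists 0.
  have [w Hw] := Riesz hWs Hf Ww0 Hn; by exists w.
have [nx Hnx] := choice step.
pose pre := fix pre (n : nat) : nat -> V :=
  match n with 0 => fun _ => 0 | n'.+1 => fun i => if i == n' then nx (pre n', n') else pre n' i end.
pose w k := nx (pre k, k).
have Hpre : forall n i, (i < n)%N -> pre n i = w i.
  elim=> [//|n IHn] i; rewrite ltnS leq_eqVlt => /orP[/eqP ->|lt]; first by rewrite /= eqxx.
  by rewrite /= (ltn_eqF lt) IHn.
have HW : forall k, W (w k).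
  elim/ltn_ind => k IHk.
  have := Hnx (pre k, k); rewrite /= => H.
  have [] := H; last by [].
  by move=> i ik; rewrite Hpre //; exact: IHk.
have Hk : forall k, forall i, (i < k)%N -> W (pre k i).
  by move=> k i ik; rewrite Hpre.
exists w; split.
  by move=> k; have [? [? _]] := Hnx (pre k, k) (Hk k).
move=> k l lk.
have [_ [_ H]] := Hnx (pre k, k) (Hk k).
have := H (fun i => if i == l then 1 else 0).
have -> : \sum_(i < k) (if (i : nat) == l then 1 else 0) *: pre k i = w l.
  rewrite (bigD1 (Ordinal lk)) //= eqxx scale1r Hpre // big1 ?addr0 //.
  move=> i hi; have : (i : nat) != l.
    by apply: contra hi => /eqP e; apply/eqP; apply: ord_inj.
  by move/negbTE => ->; rewrite scale0r.
by [].
Qed.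

End Sep.

Section SupInf.
Variable R : realType.
Implicit Types E : set R.

Lemma sup_le' E (b : R) : (forall x, E x -> x <= b) -> 0 <= b -> sup E <= b.
Proof.
move=> H b0; have [[x Ex]|E0] := pselect (E !=set0); first by apply: ge_sup => //; exists x.
have -> : E = set0 by apply/seteqP; split => // x Ex; apply: E0; exists x.
by rewrite sup0.
Qed.

Lemma sup_ge0 E : (forall x, E x -> 0 <= x) -> 0 <= sup E.
Proof.
move=> H; have [hs|hs] := pselect (has_sup E); last by rewrite sup_out.
have [[x Ex] _] := hs; apply: le_trans (H x Ex) _.
exact: sup_upper_bound.
Qed.

Lemma inf_ge0 E : (forall x, E x -> 0 <= x) -> 0 <= inf E.
Proof.
move=> H; have [[x Ex]|E0] := pselect (E !=set0); first by apply: lb_le_inf => //; exists x.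
have -> : E = set0 by apply/seteqP; split => // x Ex; apply: E0; exists x.
by rewrite inf0.
Qed.

Lemma inf_le_el E y : (forall x, E x -> 0 <= x) -> E y -> inf E <= y.
Proof. by move=> H Ey; apply: ge_inf => //; exists 0. Qed.

End SupInf.

Section Moduli.
Variable R : realType.

Lemma fc_setT (V : normedModType R) : finite_codim [set: V].
Proof.
split; first by split.
exists 0%N, (fun _ => 0) => y; exists (fun _ => 0), y; split => //.
by rewrite big_ord0 addr0.
Qed.

Lemma unit_in (V : normedModType R) (Z : set V) : infinite_dimensional V ->
  finite_codim Z -> exists z, Z z /\ `|z| = 1.
Proof.
move=> hV hZ; have [w0 [Zw0 Hn]] := exists_out hV hZ 0 (fun _ => 0).
have w0n : w0 != 0.
  by apply/eqP => e; apply: Hn; exists (fun _ => 0); rewrite big_ord0.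
exists (`|w0|^-1 *: w0); split; first exact: subZ hZ.1 Zw0.
by rewrite normrZ normfV normr_id mulVf // normr_eq0.
Qed.

Lemma rho_ext (Y : normedModType R) (t eta : R) (y0 : Y) : 0 <= t -> 0 < eta ->
  `|y0| = 1 -> exists W, finite_codim W /\
    forall w, W w -> `|w| = 1 -> `|y0 + t *: w| <= 1 + rho_bar Y t + eta.
Proof.
move=> t0 e0 y0n.
have Gb : forall (y : Y) Z, `|y| = 1 -> forall x,
    [set `|y + t *: z| | z in sphere_of Z] x -> x <= 1 + t.
  move=> y Z yn _ [z [_ zn] <-]; apply: le_trans (ler_normD _ _) _.
  by rewrite normrZ zn yn mulr1 ger0_norm.
have Gs : forall (y : Y) Z, `|y| = 1 ->
    0 <= sup [set `|y + t *: z| | z in sphere_of Z] <= 1 + t.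
  move=> y Z yn; apply/andP; split.
    by apply: sup_ge0 => _ [z _ <-].
  by apply: sup_le' => //; [exact: Gb | lra].
pose F (y : Y) := [set sup [set `|y + t *: z| | z in sphere_of Z]
               | Z in [set Z : set Y | finite_codim Z]].
have Fn : forall y, F y !=set0.
  by move=> y; exists (sup [set `|y + t *: z| | z in sphere_of [set: Y]]), setT => //; exact: fc_setT.
have Fl : forall y, `|y| = 1 -> forall x, F y x -> 0 <= x.
  by move=> y yn _ [Z _ <-]; have /andP[] := Gs y Z yn.
have Eub : has_ubound [set inf (F y) - 1 | y in sphere_of [set: Y]].
  exists t => _ [y [_ yn] <-].
  have : inf (F y) <= sup [set `|y + t *: z| | z in sphere_of [set: Y]].
    apply: inf_le_el; first exact: Fl.
    by exists setT => //; exact: fc_setT.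
  by have /andP[_ h] := Gs y setT yn; lra.
have H1 : inf (F y0) - 1 <= rho_bar Y t.
  by apply: ub_le_sup => //; exists y0.
have H2 : inf (F y0) < 1 + rho_bar Y t + eta by lra.
have [_ [W hW <-] HW] := inf_lt (Fn y0) H2.
exists W; split => // w Ww wn.
apply: le_trans (ltW HW); apply: ub_le_sup.
  by exists (1 + t); exact: Gb.
by exists w.
Qed.

Lemma delta_le (X : normedModType R) (s B : R) (x : X) : 0 <= s -> `|x| = 1 ->
  (forall Z, finite_codim Z -> exists z, Z z /\ `|z| = 1 /\ `|x + s *: z| <= B) ->
  delta_bar X s <= B - 1.
Proof.
move=> s0 xn H.
pose F (x : X) := [set inf [set `|x + s *: z| | z in sphere_of Z]
               | Z in [set Z : set X | finite_codim Z]].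
have Fl : forall x, forall y, F x y -> 0 <= y.
  by move=> x' _ [Z _ <-]; apply: inf_ge0 => _ [z _ <-].
have Elb : has_lbound [set sup (F x) - 1 | x in sphere_of [set: X]].
  exists (-1) => _ [x' _ <-].
  have := sup_ge0 (Fl x'); lra.
have H1 : delta_bar X s <= sup (F x) - 1.
  by apply: ge_inf => //; exists x.
have H2 : sup (F x) <= B.
  apply: ge_sup; first by exists (inf [set `|x + s *: z| | z in sphere_of [set: X]]), setT => //; exact: fc_setT.
  move=> _ [Z hZ <-]; have [z [Zz [zn Hz]]] := H Z hZ.
  apply: le_trans Hz; apply: inf_le_el; first by move=> _ [z' _ <-].
  by exists z.
lra.
Qed.

End Moduli.

Section Ext.
Variables (R : realType) (X Y : normedModType R) (S : set X) (f : X -> Y).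

Lemma Lip_fine_ge0 : 0 <= fine (Lip_inf S f).
Proof.
case E: (Lip_inf S f) => [r| |] //=.
rewrite leNgt; apply/negP => r0.
have : (Lip_inf S f < 0%:E)%E by rewrite E lte_fin.
move=> /ereal_inf_lt [_ [s s0 <-] Hs].
have [[p Hp]|Hn] := pselect (exists p : X * X, S p.1 /\ S p.2 /\ s <= `|p.1 - p.2|).
  have h : ((`|f p.1 - f p.2| / `|p.1 - p.2|)%:E <= Lip_s S f s)%E.
    by apply: ereal_sup_ubound; exists p.
  have := le_lt_trans h Hs; rewrite lte_fin ltNge divr_ge0 //.
have E0 : [set ((`|f p.1 - f p.2| / `|p.1 - p.2|)%:E)
            | p in [set p : X * X | S p.1 /\ S p.2 /\ s <= `|p.1 - p.2|]] = set0.
  by apply/seteqP; split => // x [p hp _]; case: Hn; exists p.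
have : (Lip_inf S f <= Lip_s S f s)%E by apply: ereal_inf_lbound; exists s.
by rewrite /Lip_s E0 ereal_sup0 E leeNy_eq.
Qed.

Lemma c_fine_ge0 K : 0 <= fine (c_inf S f K).
Proof.
case E: (c_inf S f K) => [r| |] //=.
rewrite leNgt; apply/negP => r0.
have : (c_inf S f K < 0%:E)%E by rewrite E lte_fin.
move=> /ereal_inf_lt [_ [d Kd <-] Hd]; move: Hd => /ereal_inf_lt [_ [c [c0 _] <-] Hc].
by move: Hc; rewrite lte_fin ltNge ltW.
Qed.

Lemma Lip_ext : 0 < fine (Lip_inf S f) -> forall L', fine (Lip_inf S f) < L' ->
  exists s0, 0 < s0 /\ forall p q, S p -> S q -> s0 <= `|p - q| ->
    `|f p - f q| <= L' * `|p - q|.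
Proof.
case E: (Lip_inf S f) => [r| |] //=; last by rewrite ltxx.
  move=> r0 L' rL.
  have : (Lip_inf S f < L'%:E)%E by rewrite E lte_fin.
  move=> /ereal_inf_lt [_ [s0 s00 <-] Hs]; exists s0; split => // p q Sp Sq Hpq.
  have h : ((`|f p - f q| / `|p - q|)%:E <= Lip_s S f s0)%E.
    by apply: ereal_sup_ubound; exists (p, q).
  have := le_lt_trans h Hs; rewrite lte_fin ltr_pdivrMr; last exact: lt_le_trans Hpq.
  by move=> /ltW.
by rewrite ltxx.
Qed.

Lemma c_ext_up K : 0 < fine (c_inf S f K) -> forall c', fine (c_inf S f K) < c' ->
  exists d0 c0, K < d0 /\ c_admissible S f K d0 c0 /\ c0 < c'.
Proof.
case E: (c_inf S f K) => [r| |] //=; try by rewrite ltxx.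
move=> r0 c' rc.
have : (c_inf S f K < c'%:E)%E by rewrite E lte_fin.
move=> /ereal_inf_lt [_ [d Kd <-] Hd]; move: Hd => /ereal_inf_lt [_ [c hc <-] Hc].
by move: Hc; rewrite lte_fin => cc'; exists d, c.
Qed.

Lemma c_ext_low K : 0 < fine (c_inf S f K) -> forall c'' d, c'' < fine (c_inf S f K) ->
  K < d -> ~ c_admissible S f K d c''.
Proof.
case E: (c_inf S f K) => [r| |] //=; try by rewrite ltxx.
move=> r0 c'' d cr Kd hc.
have h1 : (c_d S f K d <= c''%:E)%E by apply: ereal_inf_lbound; exists c''.
have h2 : (c_inf S f K <= c_d S f K d)%E by apply: ereal_inf_lbound; exists d.
have := le_trans h2 h1; rewrite E lee_fin => h.
by have := lt_le_trans cr h; rewrite ltxx.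
Qed.

End Ext.

Section VecId.
Variables (R : realType) (V : normedModType R).
Lemma vecL1 (p q w : V) : (p - w) - (q - w) = p - q.
Proof. by rewrite opprB addrA subrK. Qed.
Lemma vecK3 (x y z : V) : (x + y) - (x + z) = y - z.
Proof. by rewrite [x + y]addrC addrKA. Qed.
Lemma vecK (x y : V) : (x + y) - x = y.
Proof. by rewrite addrAC subrr add0r. Qed.
Lemma vecS (p a b q : V) : (p - a) + (b - q) = (p - q) + (b - a).
Proof. by rewrite addrACA [- a - q]addrC -addrACA. Qed.
Lemma vecI3 (a b p q z : V) : (b - a) + z = ((p - a) + (b - q)) - ((p - q) - z).
Proof. by rewrite vecS vecK3 opprK. Qed.
End VecId.

Lemma big_enough (R : realType) (al be : R) : 0 < al ->
  exists L, 0 <= L /\ forall r, L <= r -> be <= al * r.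
Proof.
move=> a0; exists (`|be| / al); split; first by rewrite divr_ge0 // ltW.
move=> r Hr; apply: le_trans (ler_norm be) _.
by rewrite mulrC -ler_pdivrMr.
Qed.

Unset Implicit Arguments.
Theorem theorem4p5 (R : realType) (X Y : completeNormedModType R)
  (hX : infinite_dimensional X) (hY : infinite_dimensional Y)
  (S : set X) (f : X -> Y) (g : Y -> X)
  (hgS : forall y : Y, S (g y))
  (hf : coarsely_continuous_on S f)
  (hg : coarsely_continuous_on [set: Y] g)
  (hgf : exists M : R, forall x : X, S x -> `|g (f x) - x| <= M)
  (hfg : exists M : R, forall y : Y, `|f (g y) - y| <= M)
  (hlip : coarse_lipschitz S f)
  (t : R) (ht0 : 0 < t) (ht1 : t <= 1) :
  let K := sup [set `|f (g y) - y| | y in [set: Y]] in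
  delta_bar X (t / (56 * fine (Lip_inf S f) * fine (c_inf S f K)))
    <= rho_bar Y t.
Proof.
cbv zeta.
set K := sup [set `|f (g y) - y| | y in [set: Y]].
have t0 : 0 <= t := ltW ht0.
have [M1 HM1] := hfg.
have HK : forall y, `|f (g y) - y| <= K.
  move=> y; apply: ub_le_sup; last by exists y.
  by exists M1 => _ [y' _ <-]; exact: HM1.
have K0 : 0 <= K := le_trans (normr_ge0 _) (HK 0).
have [M HM] := hgf.
have M0 : 0 <= M := le_trans (normr_ge0 _) (HM _ (hgS 0)).
have h2K : 0 < 2 * K + 1 by lra.
have [om Hom] := hg _ h2K.
have om0 : 0 <= om.
  have := Hom 0 0 I I; rewrite !subrr !normr0; apply; lra.
set C0 := M + om.
have C00 : 0 <= C0 by rewrite /C0; lra.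
have HG : forall x' y, S x' -> `|y - f x'| <= K -> `|g y - x'| <= C0.
  move=> x' y Sx' Hy; apply: le_trans (ler_distD (g (f x')) _ _) _.
  have h1 : `|y - f x'| <= 2 * K + 1 by lra.
  have := lerD (Hom _ _ I I h1) (HM _ Sx'); rewrite /C0; lra.
clearbody C0.
set rho := rho_bar Y t.
have [y00 [_ y00n]] := unit_in hY (fc_setT Y).
have rho0 : 0 <= rho.
  apply/ler_addgt0Pr => e e0.
  have [W [hW HW]] := rho_ext t0 e0 y00n.
  have [w [Ww wn]] := unit_in hY hW.
  have h1 := HW w Ww wn.
  have wn' : `|- w| = 1 by rewrite normrN.
  have h2 := HW (- w) (subN hW.1 Ww) wn'.
  have E : (y00 + t *: w) + (y00 + t *: - w) = (1 + 1) *: y00.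
    by rewrite scalerN scalerDl scale1r addrACA subrr addr0.
  have := ler_normD (y00 + t *: w) (y00 + t *: - w).
  rewrite E normrZ y00n mulr1 ger0_norm; last by lra.
  rewrite -/rho in h1 h2; lra.
have Lge0 := Lip_fine_ge0 S f.
have cge0 := c_fine_ge0 S f K.
set Lc := fine (Lip_inf S f) in Lge0 *.
set cc := fine (c_inf S f K) in cge0 *.
set s := t / (56 * Lc * cc).
have Hcase : (0 < Lc /\ 0 < cc) \/ s = 0.
  move: Lge0 cge0; rewrite !le_eqVlt => /orP[/eqP L0|L0] /orP[/eqP c0|c0].
  - by right; rewrite /s -L0 mulr0 mul0r invr0 mulr0.
  - by right; rewrite /s -L0 mulr0 mul0r invr0 mulr0.
  - by right; rewrite /s -c0 mulr0 invr0 mulr0.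
  - by left.
case: Hcase => [[Lc0 cc0]|s0]; last first.
  have [x [_ xn]] := unit_in hX (fc_setT X).
  rewrite s0; apply: le_trans (delta_le (B := 1 + rho) (lexx 0) xn _) _; last by lra.
  move=> Z hZ; have [z [Zz zn]] := unit_in hX hZ.
  by exists z; split => //; split => //; rewrite scale0r addr0 xn; lra.
have spos : 0 < s by rewrite /s divr_gt0 // !mulr_gt0.
have sig56 : Lc * s * (56 * cc) = t.
  by rewrite /s; field; rewrite !gt_eqF.
clearbody s.
suff Hsuf : forall eta, 0 < eta -> eta <= 1 -> delta_bar X s <= rho + eta.
  apply/ler_addgt0Pr => e e0; case: (lerP e 1) => e1; first exact: Hsuf.
  by have := Hsuf 1 ltr01 (lexx _); clear -e1; lra.
move=> eta eta0 eta1.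
set P := 1 + rho + eta / 2.
set Q := 1 + rho + eta.
have P1 : 1 <= P by rewrite /P; clear -rho0 eta0; lra.
have QP : Q = P + eta / 2 by rewrite /P /Q; clear -eta0; lra.
set c2 := cc * (P + Q) / (2 * Q).
set c1 := cc * (3 * P + Q) / (4 * P).
have F5 : c1 * P + cc * eta / 8 = c2 * Q.
  rewrite /c1 /c2 QP; field; apply/andP; split; rewrite gt_eqF //; clear -P1 eta0; lra.
have c20 : 0 < c2 by rewrite /c2 divr_gt0 // ?mulr_gt0 //; clear -P1 QP eta0; lra.
have c2lt : c2 < cc.
  rewrite /c2 ltr_pdivrMr; last by clear -P1 QP eta0; lra.
  have : P + Q < 2 * Q by clear -P1 QP eta0 eta1; lra.
  move=> h; have := ltr_pM2l cc0; move=> /(_ (P + Q) (2 * Q)); rewrite h; clear -cc0; lra.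
have c1gt : cc < c1.
  rewrite /c1 ltr_pdivlMr; last by clear -P1 QP eta0; lra.
  have : 4 * P < 3 * P + Q by clear -P1 QP eta0 eta1; lra.
  move=> h; have := ltr_pM2l cc0; move=> /(_ (4 * P) (3 * P + Q)); rewrite h; clear -cc0; lra.
have c1le : c1 <= 2 * cc.
  rewrite /c1 ler_pdivrMr; last by clear -P1 QP eta0; lra.
  have : 3 * P + Q <= 8 * P by clear -P1 QP eta0 eta1; lra.
  move=> h; have := ler_pM2l cc0; move=> /(_ (3 * P + Q) (8 * P)); rewrite h; clear -cc0; lra.
clearbody c1 c2.
have [d0 [c0 [Kd0 [[c0pos HA0] c0c1]]]] := c_ext_up cc0 c1gt.
have HAg : forall x r y, S x -> d0 <= r -> `|y - f x| <= r -> `|g y - x| <= c0 * r + C0.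
  move=> x r y Sx hr hy; have [x' [Sx' [Hx' Hy']]] := HA0 x r Sx hr y hy.
  apply: le_trans (ler_distD x' _ _) _.
  by have := HG x' y Sx' Hy'; clear -Hx'; lra.
have L2 : Lc < 2 * Lc by clear -Lc0; lra.
have [s0 [s00 HL]] := Lip_ext Lc0 L2.
have [omf Homf] := hf s0 s00.
have sc0 : Lc * s * c0 <= t / 28.
  have := ler_wpM2l (_ : 0 <= Lc * s) (le_trans (ltW c0c1) c1le).
  by move=> /(_ (ltW (mulr_gt0 Lc0 spos))); clear -sig56; lra.
have a10 : 0 < (1 : R) by [].
have [L1 [L10 HL1]] := big_enough (2 * d0) a10.
have a20 : 0 < t / 4 by rewrite divr_gt0.
have [L2' [L20 HL2]] := big_enough (omf + 2 * K + 1) a20.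
have a30 : 0 < t / 4 - 2 * (Lc * s * c0) by clear -sc0 ht0; lra.
have [L3 [L30 HL3]] := big_enough (2 * (Lc * s) * C0 + 2 * K + 2 * Lc) a30.
have a40 : 0 < cc * eta / 16 by rewrite !divr_gt0 // mulr_gt0.
have [L4 [L40 HL4]] := big_enough (c0 * K + C0 + 1 / 2) a40.
set Lam := L1 + L2' + L3 + L4.
have Lam0 : 0 <= Lam by rewrite /Lam; clear -L10 L20 L30 L40; lra.
have HC : forall r, Lam <= r ->
  [/\ 2 * d0 <= r, omf + 2 * K + 1 <= r * t / 4,
      2 * (Lc * s) * (c0 * r + C0) + 2 * K + 2 * Lc <= r * t / 4 &
      c0 * K + C0 + 1 / 2 <= r * (cc * eta / 16)].
  move=> r hr; rewrite /Lam in hr; split.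
  - have h : L1 <= r by clear -hr L10 L20 L30 L40; lra.
    by have := HL1 r h; clear -h; lra.
  - have h : L2' <= r by clear -hr L10 L20 L30 L40; lra.
    by have := HL2 r h; clear -h; lra.
  - have h : L3 <= r by clear -hr L10 L20 L30 L40; lra.
    by have := HL3 r h; clear -h; lra.
  - have h : L4 <= r by clear -hr L10 L20 L30 L40; lra.
    by have := HL4 r h; clear -h; lra.
clearbody Lam.
set d := (c0 * Lam + C0) / c2 + K + 1.
have c2d : c0 * Lam + C0 <= c2 * d.
  have h : c2 * ((c0 * Lam + C0) / c2) = c0 * Lam + C0.
    by rewrite mulrC divfK // gt_eqF.
  rewrite /d !mulrDr h; have := mulr_ge0 (ltW c20) K0; clear -c20; lra.
have Kd : K < d.
  rewrite /d; have : 0 <= (c0 * Lam + C0) / c2.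
    by rewrite divr_ge0 ?(ltW c20) // addr_ge0 // mulr_ge0 // ltW.
  clear -K0; lra.
clearbody d.
have hna := c_ext_low cc0 c2lt Kd.
have Hex : exists (a : X) (r : R) (y1 : Y), S a /\ d <= r /\
    `|y1 - f a| <= r /\ forall x' : X, S x' -> `|x' - a| <= c2 * r -> `|y1 - f x'| <= K -> False.
  apply: contrapT => Hn; apply: hna; split => // x r Sx dr y Hy.
  apply: contrapT => Hn2; apply: Hn; exists x, r, y; split => //; split => //; split => //.
  by move=> x' Sx' h1 h2; apply: Hn2; exists x'.
have [a [r [y1 [Sa [dr [Hy1 Hno]]]]]] := Hex.
set b := g y1.
have Sb : S b := hgS y1.
have Hy1b : `|y1 - f b| <= K by rewrite distrC; exact: HK.
have Hba : c2 * r < `|b - a|.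
  by rewrite ltNge; apply/negP => h; exact: Hno b Sb h Hy1b.
set rr := `|y1 - f a| in Hy1.
have d00 : 0 < d0 by clear -Kd0 K0; lra.
have rrL : Lam <= rr.
  rewrite leNgt; apply/negP => h.
  have [h1 _ _ _] := HC Lam (lexx _).
  have := HAg a Lam y1 Sa (_ : d0 <= Lam) (ltW h); move=> /(_ ltac:(clear -h1 d00; lra)).
  have := ler_wpM2l (ltW c20) dr.
  rewrite -/b; clear -c2d Hba; lra.
have [C1 C2 C3 C4] := HC rr rrL.
have rr0 : 0 < rr by clear -C1 d00; lra.
have Hba2 : `|b - a| <= c0 * rr + C0 by apply: HAg => //; clear -C1 d00; lra.
have Hba1 : c2 * rr < `|b - a|.
  by apply: le_lt_trans Hba; rewrite ler_wpM2l // ltW.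
have rrn0 : rr != 0 by rewrite gt_eqF.
set y0 := rr^-1 *: (y1 - f a).
have y0n : `|y0| = 1.
  by rewrite /y0 normrZ normfV normr_id mulVf.
have Hy1e : y1 = f a + rr *: y0.
  by rewrite /y0 scalerA mulfV // scale1r addrC subrK.
have eta20 : 0 < eta / 2 by rewrite divr_gt0.
have [W [hW HW]] := rho_ext t0 eta20 y0n.
rewrite -/rho -/P in HW.
have [w [Hw Hsep]] := sep_seq hY hW.
have rr20 : 0 <= rr / 2 by rewrite divr_ge0 // ltW.
pose mk k := f a + (rr / 2) *: (y0 + t *: w k).
have Hm1 : forall k, `|mk k - f a| <= rr / 2 * P.
  move=> k; rewrite /mk vecK normrZ (ger0_norm rr20) ler_wpM2l //.
  by have [Wk wk] := Hw k; exact: HW.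
have Hm2 : forall k, `|mk k - y1| <= rr / 2 * P.
  move=> k; have [Wk wk] := Hw k.
  have E : rr *: y0 = (rr / 2) *: (y0 + y0).
    by rewrite scalerDr -scalerDl -splitr.
  rewrite /mk Hy1e vecK3 E -scalerBr vecK3 normrZ (ger0_norm rr20) ler_wpM2l //.
  rewrite distrC -scalerN; apply: HW; first exact: subN hW.1 Wk.
  by rewrite normrN.
pose e k := g (mk k).
have HP0 : d0 <= rr / 2 * P.
  have : rr / 2 <= rr / 2 * P by rewrite ler_peMr.
  clear -C1; lra.
have He1 : forall k, `|e k - a| <= c0 * (rr / 2 * P) + C0.
  by move=> k; apply: HAg => //; exact: Hm1.
set R1 := c0 * (rr / 2 * P + K) + C0.
have He1' : forall k, `|e k - a| <= R1.
  move=> k; apply: le_trans (He1 k) _; rewrite /R1 mulrDr.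
  by have := mulr_ge0 (ltW c0pos) K0; clear -C00; lra.
have He2 : forall k, `|e k - b| <= R1.
  move=> k; apply: HAg => //; first by clear -HP0 K0; lra.
  apply: le_trans (ler_distD y1 _ _) _.
  by have := Hm2 k; clear -Hy1b; lra.
have Hsep2 : forall k l, k <> l -> 1 / 2 < `|w k - w l|.
  move=> k l /eqP; rewrite neq_ltn => /orP[kl|lk]; last exact: Hsep.
  by rewrite distrC; exact: Hsep.
have Hsepe : forall k l, k <> l -> rr * t / 4 - 2 * K <= 2 * Lc * `|e k - e l|.
  move=> k l kl.
  have Emk : mk k - mk l = (rr / 2) *: (t *: (w k - w l)).
    by rewrite /mk vecK3 -scalerBr vecK3 [t *: (_ - _)]scalerBr.
  have h1 : rr * t / 4 <= `|mk k - mk l|.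
    rewrite Emk normrZ (ger0_norm rr20) normrZ (ger0_norm t0).
    have := Hsep2 k l kl => h.
    have := ler_wpM2l (mulr_ge0 rr20 t0) (ltW h); clear -t0; lra.
  have h2a : `|mk k - f (e k)| <= K by rewrite distrC; exact: HK.
  have h2b : `|f (e l) - mk l| <= K by exact: HK.
  have h2c : `|mk k - mk l| <= `|mk k - f (e k)| + (`|f (e k) - f (e l)| + `|f (e l) - mk l|).
    apply: le_trans (ler_distD (f (e k)) _ _) _; rewrite lerD2l; exact: ler_distD.
  have h2 : `|mk k - mk l| <= K + `|f (e k) - f (e l)| + K.
    by clear -h2a h2b h2c; lra.
  have [hs|hs] := lerP `|e k - e l| s0.
    by have := Homf _ _ (hgS _) (hgS _) hs; clear -h1 h2 C2; lra.
  have := HL _ _ (hgS _) (hgS _) (ltW hs); clear -h1 h2; lra.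
have half0 : 0 <= 1 / 2 :> R by rewrite divr_ge0.
set xt := (1 / 2) *: (b - a).
have xtn : `|xt| = `|b - a| / 2.
  by rewrite /xt normrZ (ger0_norm half0) mulrC mul1r.
have xt0 : 0 < `|xt|.
  rewrite xtn; have := mulr_gt0 c20 rr0; clear -Hba1; lra.
set x := `|xt|^-1 *: xt.
have xn : `|x| = 1 by rewrite /x normrZ normfV normr_id mulVf // gt_eqF.
apply: le_trans (delta_le (B := Q) (ltW spos) xn _) _; last by rewrite /Q; clear; lra.
move=> Z hZ.
have [k [l [kl [z1 [Zz1 Hz1]]]]] := @codim_pair _ _ Z (fun k => e k - a) R1 1 hZ He1' ltr01.
rewrite /= vecL1 in Hz1.
set z0 := (1 / 2) *: z1.
have Zz0 : Z z0 := subZ _ hZ.1 Zz1.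
have Hskl := Hsepe k l kl.
have hz1lo : `|e k - e l| - 1 <= `|z1|.
  by have := lerB_dist (e k - e l) z1; clear -Hz1; lra.
have z0n : `|z0| = `|z1| / 2.
  by rewrite /z0 normrZ (ger0_norm half0) mulrC mul1r.
have Hxtz : `|xt + z0| <= R1 + 1 / 2.
  have E : xt + z0 = (1 / 2) *: ((b - a) + z1) by rewrite /xt /z0 [RHS]scalerDr.
  rewrite E normrZ (ger0_norm half0) (vecI3 a b (e k) (e l) z1).
  have n1 := ler_normB ((e k - a) + (b - e l)) (e k - e l - z1).
  have n2 := ler_normD (e k - a) (b - e l).
  have n3 := He1' k; have n4 := He2 l; rewrite distrC in n4.
  clear -n1 n2 n3 n4 Hz1; lra.
have Hxtle : `|xt| <= R1 + 1 / 2.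
  have g1 : c0 * rr <= c0 * (rr * P) := ler_pM (ltW c0pos) (ltW rr0) (lexx c0) (ler_peMr (ltW rr0) P1).
  have g2 := mulr_ge0 (ltW c0pos) K0.
  rewrite xtn /R1; clear -g1 g2 Hba2 C00; lra.
have Cond : s * `|xt| <= `|z0|.
  have f1 : Lc * s * `|b - a| <= Lc * s * (c0 * rr + C0).
    by rewrite ler_wpM2l // mulr_ge0 // ltW.
  have f2 : Lc * (`|e k - e l| - 1) <= Lc * `|z1| by rewrite ler_wpM2l // ltW.
  have : Lc * (s * `|xt|) <= Lc * `|z0|.
    rewrite xtn z0n; clear -f1 f2 C3 Hskl; lra.
  by rewrite ler_pM2l.
have z0pos : 0 < `|z0|.
  by apply: lt_le_trans Cond; rewrite mulr_gt0.
set lam := s * `|xt| / `|z0|.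
have lam0 : 0 <= lam by rewrite /lam divr_ge0 // mulr_ge0 // ltW.
have lam1 : lam <= 1 by rewrite /lam ler_pdivrMr // mul1r.
set z := `|z0|^-1 *: z0.
have Zz : Z z := subZ _ hZ.1 Zz0.
have zn : `|z| = 1 by rewrite /z normrZ normfV normr_id mulVf // gt_eqF.
have Ekey : x + s *: z = `|xt|^-1 *: ((1 - lam) *: xt + lam *: (xt + z0)).
  have E1 : (1 - lam) *: xt + lam *: (xt + z0) = xt + lam *: z0.
    by rewrite scalerDr addrA -scalerDl subrK scale1r.
  rewrite E1 scalerDr /x /z; congr (_ + _); rewrite !scalerA; congr (_ *: _).
  by rewrite /lam; field; rewrite !gt_eqF.
exists z; split => //; split => //.
rewrite Ekey normrZ normfV normr_id.
have lam1' : 0 <= 1 - lam by clear -lam1; lra.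
have n1 : `|(1 - lam) *: xt + lam *: (xt + z0)| <= (1 - lam) * `|xt| + lam * `|xt + z0|.
  apply: le_trans (ler_normD _ _) _.
  by rewrite normrZ (ger0_norm lam1') [`|lam *: _|]normrZ (ger0_norm lam0).
have n2 : (1 - lam) * `|xt| + lam * `|xt + z0| <= R1 + 1 / 2.
  have := ler_wpM2l lam1' Hxtle; have := ler_wpM2l lam0 Hxtz.
  clear; lra.
have n3 : R1 + 1 / 2 <= Q * `|xt|.
  have rP : 0 <= rr / 2 * P by rewrite mulr_ge0 // ltW //; clear -P1; lra.
  have g1 : c0 * (rr / 2 * P) <= c1 * (rr / 2 * P) by rewrite ler_wpM2r // ltW.
  have g2 : (c1 * P + cc * eta / 8) * rr = c2 * Q * rr by rewrite F5.
  have Q0 : 0 <= Q by rewrite QP; clear -P1 eta0; lra.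
  have g3 : c2 * rr * Q <= `|b - a| * Q by rewrite ler_wpM2r // ltW.
  rewrite xtn /R1; clear -g1 g2 g3 C4; lra.
rewrite mulrC ler_pdivrMr //; clear -n1 n2 n3; lra.
Qed.
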